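(* Let $(\omega,\gamma,\mu,c)$ be a normalized quasi-abelian 3-cocycle on a finite crossed module $(G,X,\partial)$. Let $H=H(\omega,\gamma,\mu,c)$ be the vector space with basis $\{t_xg\}_{(x,g)\in X\times G}$, with product $(t_xg)(t_yh)=\delta_{x,{}^hy}\,\gamma_{g,h}(y)^{-1}\,t_y(gh)$, unit $1=\sum_{x\in X}t_xe$, coproduct $\Delta(t_xg)=\sum_{a,b\in X,\ ab=x}\mu_g(a,b)\,t_ag\otimes t_bg$, counit $\varepsilon(t_xg)=\delta_{x,e}$, Drinfeld associator $\Phi=\sum_{x,y,z\in X}\omega(x,y,z)\,t_xe\otimes t_ye\otimes t_ze$, elements $\alpha=1$, $\beta=\sum_{x\in X}\omega(x^{-1},x,x^{-1})\,t_xe$, linear map $S(t_xg)=\frac{\gamma_{g^{-1},g}(x^{-1})}{\mu_g(x,x^{-1})}\,t_{{}^g(x^{-1})}g^{-1}$, and $R=\sum_{x,y\in X}c(x,y)\,t_xe\otimes t_y\partial(x)$. Then these data make $H$ a quasi-triangular quasi-Hopf algebra (with antipode $(S,\alpha,\beta)$, $S$ an algebra anti-automorphism) with universal $R$-matrix $R$.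
   Context: $\mathbb{K}$ is an algebraically closed field of characteristic $0$. Quasi-Hopf and quasi-triangular quasi-Hopf algebras are in the sense of Drinfeld (as in Kassel, Quantum Groups, Chapter XV: a quasi-bialgebra $(H,\Delta,\varepsilon,\Phi)$ with antipode $(S,\alpha,\beta)$ and an invertible universal $R$-matrix). A finite crossed module is a triple $(G,X,\partial)$ with $G,X$ finite groups, $G$ acting on $X$ by automorphisms $(g,x)\mapsto {}^{g}x$, and $\partial:X\to G$ a homomorphism with ${}^{\partial(x)}x'=xx'x^{-1}$ and $\partial({}^gx)=g\partial(x)g^{-1}$. A quasi-abelian 3-cocycle on it is a quadruple $(\omega,\gamma,\mu,c)$ of functions $\omega:X^3\to\mathbb{K}^\times$, $(g,h,x)\mapsto\gamma_{g,h}(x)$ on $G\times G\times X$, $(g,x,y)\mapsto\mu_g(x,y)$ on $G\times X\times X$, $c:X^2\to\mathbb{K}^\times$, such that for all $g,h,k\in G$, $w,x,y,z\in X$: (a) $\omega(x,y,z)\omega(w,xy,z)\omega(w,x,y)=\omega(w,x,yz)\omega(wx,y,z)$; (b) $\gamma_{h,k}(x)\gamma_{g,hk}(x)=\gamma_{gh,k}(x)\gamma_{g,h}({}^kx)$; (c) $\frac{\mu_g(y,z)\mu_g(x,yz)}{\mu_g(xy,z)\mu_g(x,y)}=\frac{\omega({}^gx,{}^gy,{}^gz)}{\omega(x,y,z)}$; (d) $\frac{\gamma_{g,h}(x)\gamma_{g,h}(y)}{\gamma_{g,h}(xy)}=\frac{\mu_g({}^hx,{}^hy)\mu_h(x,y)}{\mu_{gh}(x,y)}$;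 (e) $\frac{c({}^gx,{}^gy)}{c(x,y)}=\frac{\mu_g(xyx^{-1},x)}{\mu_g(x,y)}\cdot\frac{\gamma_{g\partial(x)g^{-1},g}(y)}{\gamma_{g,\partial(x)}(y)}$; (f) $c(xy,z)=\frac{\omega(x,y,z)\,\omega((xy)z(xy)^{-1},x,y)}{\omega(x,yzy^{-1},y)\,\gamma_{\partial(x),\partial(y)}(z)}\,c(x,yzy^{-1})\,c(y,z)$; (g) $c(x,yz)=\frac{\omega(xyx^{-1},x,z)}{\omega(x,y,z)\,\omega(xyx^{-1},xzx^{-1},x)\,\mu_{\partial(x)}(y,z)}\,c(x,y)\,c(x,z)$. It is normalized if $\omega(x,y,z)=1$ whenever one of $x,y,z$ is $e$, $\gamma_{g,h}(x)=1$ whenever one of $g,h,x$ is $e$, $\mu_g(x,y)=1$ whenever one of $g,x,y$ is $e$, and $c(x,y)=1$ whenever $x$ or $y$ is $e$. *)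

(* Defs.v *)
From HB Require Import structures.
From mathcomp Require Import all_boot all_order all_algebra all_fingroup.
Set Implicit Arguments. Unset Strict Implicit. Unset Printing Implicit Defensive.
Import GRing.Theory.
Local Open Scope ring_scope.

(* Generic quasi-triangular quasi-Hopf algebra axioms (Drinfeld / Kassel     *)
(* Ch. XV) for a finite-dimensional algebra H with a finite basis indexed by *)
(* the finType B, everything given in coordinates w.r.t. that basis.          *)
(* An element of H is f : B -> K (f = sum_p f p t_p); an element of H^{(x)n}  *)
(* is a function of n basis indices (coefficient of t_p1 (x) ... (x) t_pn).  *)
(*   m p q r   = coefficient of t_r in t_p t_q   (product)                    *)
(*   u         = coordinates of the unit 1                                    *)
(*   dl p q r  = coefficient of t_q (x) t_r in Delta(t_p)                     *)
(*   e p       = epsilon(t_p)                                                 *)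
(*   Phi       = coordinates of the associator in H^{(x)3}                    *)
(*   alpha, beta in H;  Sm p q = coefficient of t_q in S(t_p);                *)
(*   Rm        = coordinates of the R-matrix in H^{(x)2}.                     *)
Section QuasiHopf.
Variables (K : fieldType) (B : finType).
Variables (m : B -> B -> B -> K) (u : B -> K) (dl : B -> B -> B -> K)
  (e : B -> K) (Phi : B -> B -> B -> K) (alpha beta : B -> K)
  (Sm : B -> B -> K) (Rm : B -> B -> K).

Definition dlt (q : B) : B -> K := fun p => (p == q)%:R.

Definition mulH (f g : B -> K) : B -> K :=
  fun r => \sum_p \sum_q f p * g q * m p q r.
Definition mul2 (F G : B -> B -> K) : B -> B -> K :=
  fun r1 r2 => \sum_p1 \sum_p2 \sum_q1 \sum_q2
    F p1 p2 * G q1 q2 * m p1 q1 r1 * m p2 q2 r2.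
Definition mul3 (F G : B -> B -> B -> K) : B -> B -> B -> K :=
  fun r1 r2 r3 => \sum_p1 \sum_p2 \sum_p3 \sum_q1 \sum_q2 \sum_q3
    F p1 p2 p3 * G q1 q2 q3 * m p1 q1 r1 * m p2 q2 r2 * m p3 q3 r3.
Definition mul4 (F G : B -> B -> B -> B -> K) : B -> B -> B -> B -> K :=
  fun r1 r2 r3 r4 => \sum_p1 \sum_p2 \sum_p3 \sum_p4
    \sum_q1 \sum_q2 \sum_q3 \sum_q4
    F p1 p2 p3 p4 * G q1 q2 q3 q4 *
    m p1 q1 r1 * m p2 q2 r2 * m p3 q3 r3 * m p4 q4 r4.

Definition one2 : B -> B -> K := fun r1 r2 => u r1 * u r2.
Definition one3 : B -> B -> B -> K := fun r1 r2 r3 => u r1 * u r2 * u r3.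
Definition one4 : B -> B -> B -> B -> K :=
  fun r1 r2 r3 r4 => u r1 * u r2 * u r3 * u r4.

Definition DeltaH (f : B -> K) : B -> B -> K :=
  fun q r => \sum_p f p * dl p q r.
Definition epsH (f : B -> K) : K := \sum_p f p * e p.
Definition SH (f : B -> K) : B -> K := fun q => \sum_p f p * Sm p q.

Definition id_D (F : B -> B -> K) : B -> B -> B -> K :=
  fun s1 s2 s3 => \sum_p F s1 p * dl p s2 s3.
Definition D_id (F : B -> B -> K) : B -> B -> B -> K :=
  fun s1 s2 s3 => \sum_p F p s3 * dl p s1 s2.
Definition id_id_D (F : B -> B -> B -> K) : B -> B -> B -> B -> K :=
  fun s1 s2 s3 s4 => \sum_p F s1 s2 p * dl p s3 s4.
Definition id_D_id (F : B -> B -> B -> K) : B -> B -> B -> B -> K :=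
  fun s1 s2 s3 s4 => \sum_p F s1 p s4 * dl p s2 s3.
Definition D_id_id (F : B -> B -> B -> K) : B -> B -> B -> B -> K :=
  fun s1 s2 s3 s4 => \sum_p F p s3 s4 * dl p s1 s2.
Definition eps_id (F : B -> B -> K) : B -> K := fun q => \sum_p F p q * e p.
Definition id_eps (F : B -> B -> K) : B -> K := fun p => \sum_q F p q * e q.
Definition id_eps_id (F : B -> B -> B -> K) : B -> B -> K :=
  fun p r => \sum_q F p q r * e q.

(* leg notation: for T = sum X (x) Y (x) Z, T_{ijk} puts X in slot i,
   Y in slot j, Z in slot k (Drinfeld's convention). *)
Definition leg312 (F : B -> B -> B -> K) := fun s1 s2 s3 => F s3 s1 s2.
Definition leg132 (F : B -> B -> B -> K) := fun s1 s2 s3 => F s1 s3 s2.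
Definition leg231 (F : B -> B -> B -> K) := fun s1 s2 s3 => F s2 s3 s1.
Definition leg213 (F : B -> B -> B -> K) := fun s1 s2 s3 => F s2 s1 s3.
Definition leg12 (F : B -> B -> K) := fun s1 s2 s3 => F s1 s2 * u s3.
Definition leg13 (F : B -> B -> K) := fun s1 s2 s3 => F s1 s3 * u s2.
Definition leg23 (F : B -> B -> K) := fun s1 s2 s3 => u s1 * F s2 s3.
Definition flip (F : B -> B -> K) := fun s1 s2 => F s2 s1.
Definition one_tensor (F : B -> B -> B -> K) :=
  fun s1 s2 s3 s4 => u s1 * F s2 s3 s4.
Definition tensor_one (F : B -> B -> B -> K) :=
  fun s1 s2 s3 s4 => F s1 s2 s3 * u s4.

Definition is_assoc_algebra : Prop :=
  (forall f g h, mulH (mulH f g) h = mulH f (mulH g h)) /\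
  (forall f, mulH u f = f) /\ (forall f, mulH f u = f).

Definition quasi_bialgebra_ax (Phii : B -> B -> B -> K) : Prop :=
  (forall f g, DeltaH (mulH f g) = mul2 (DeltaH f) (DeltaH g)) /\
  DeltaH u = one2 /\
  (forall f g, epsH (mulH f g) = epsH f * epsH g) /\
  epsH u = 1 /\
  mul3 Phi Phii = one3 /\ mul3 Phii Phi = one3 /\
  (forall f, id_D (DeltaH f) = mul3 (mul3 Phi (D_id (DeltaH f))) Phii) /\
  mul4 (id_id_D Phi) (D_id_id Phi) =
    mul4 (mul4 (one_tensor Phi) (id_D_id Phi)) (tensor_one Phi) /\
  (forall f, eps_id (DeltaH f) = f) /\ (forall f, id_eps (DeltaH f) = f) /\
  id_eps_id Phi = one2.

Definition antipode_ax (Phii : B -> B -> B -> K) : Prop :=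
  bijective SH /\
  (forall f g, SH (mulH f g) = mulH (SH g) (SH f)) /\ SH u = u /\
  (forall f, (fun r => \sum_q1 \sum_q2 DeltaH f q1 q2 *
                 mulH (mulH (SH (dlt q1)) alpha) (dlt q2) r)
             = (fun r => epsH f * alpha r)) /\
  (forall f, (fun r => \sum_q1 \sum_q2 DeltaH f q1 q2 *
                 mulH (mulH (dlt q1) beta) (SH (dlt q2)) r)
             = (fun r => epsH f * beta r)) /\
  (fun r => \sum_p1 \sum_p2 \sum_p3 Phi p1 p2 p3 *
     mulH (mulH (mulH (mulH (dlt p1) beta) (SH (dlt p2))) alpha) (dlt p3) r)
    = u /\
  (fun r => \sum_p1 \sum_p2 \sum_p3 Phii p1 p2 p3 *
     mulH (mulH (mulH (mulH (SH (dlt p1)) alpha) (dlt p2)) beta) (SH (dlt p3)) r)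
    = u.

Definition quasitriangular_ax (Phii : B -> B -> B -> K) (Ri : B -> B -> K)
  : Prop :=
  mul2 Rm Ri = one2 /\ mul2 Ri Rm = one2 /\
  (forall f, flip (DeltaH f) = mul2 (mul2 Rm (DeltaH f)) Ri) /\
  D_id Rm = mul3 (mul3 (mul3 (mul3 (leg312 Phi) (leg13 Rm)) (leg132 Phii))
                   (leg23 Rm)) Phi /\
  id_D Rm = mul3 (mul3 (mul3 (mul3 (leg231 Phii) (leg13 Rm)) (leg213 Phi))
                   (leg12 Rm)) Phii.

Definition quasitriangular_quasiHopf : Prop :=
  is_assoc_algebra /\
  exists (Phii : B -> B -> B -> K) (Ri : B -> B -> K),
    quasi_bialgebra_ax Phii /\ antipode_ax Phii /\ quasitriangular_ax Phii Ri.

End QuasiHopf.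

Section CrossedModule.
Variables (K : fieldType) (G X : finGroupType)
  (act : G -> X -> X) (d : X -> G).

Definition crossed_module : Prop :=
  (forall x, act 1%g x = x) /\
  (forall g h x, act (g * h)%g x = act g (act h x)) /\
  (forall g x y, act g (x * y)%g = (act g x * act g y)%g) /\
  (forall x y, d (x * y)%g = (d x * d y)%g) /\
  (forall x x', act (d x) x' = (x * x' * x^-1)%g) /\
  (forall g x, d (act g x) = (g * d x * g^-1)%g).

Variables (omega : X -> X -> X -> K) (gamma : G -> G -> X -> K)
  (mu : G -> X -> X -> K) (c : X -> X -> K).

Definition quasi_abelian_3cocycle : Prop :=
  (forall x y z, omega x y z != 0) /\
  (forall g h x, gamma g h x != 0) /\
  (forall g x y, mu g x y != 0) /\
  (forall x y, c x y != 0) /\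
  (* (a) *)
  (forall w x y z, omega x y z * omega w (x * y)%g z * omega w x y
                   = omega w x (y * z)%g * omega (w * x)%g y z) /\
  (* (b) *)
  (forall g h k x, gamma h k x * gamma g (h * k)%g x
                   = gamma (g * h)%g k x * gamma g h (act k x)) /\
  (* (c) *)
  (forall g x y z, mu g y z * mu g x (y * z)%g / (mu g (x * y)%g z * mu g x y)
                   = omega (act g x) (act g y) (act g z) / omega x y z) /\
  (* (d) *)
  (forall g h x y, gamma g h x * gamma g h y / gamma g h (x * y)%g
                   = mu g (act h x) (act h y) * mu h x y / mu (g * h)%g x y) /\
  (* (e) *)
  (forall g x y, c (act g x) (act g y) / c x y
       = mu g (x * y * x^-1)%g x / mu g x y *
         (gamma (g * d x * g^-1)%g g y / gamma g (d x) y)) /\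
  (* (f) *)
  (forall x y z, c (x * y)%g z
       = omega x y z * omega ((x * y) * z * (x * y)^-1)%g x y /
         (omega x (y * z * y^-1)%g y * gamma (d x) (d y) z) *
         c x (y * z * y^-1)%g * c y z) /\
  (* (g) *)
  (forall x y z, c x (y * z)%g
       = omega (x * y * x^-1)%g x z /
         (omega x y z * omega (x * y * x^-1)%g (x * z * x^-1)%g x *
          mu (d x) y z) * c x y * c x z).

Definition normalized_cocycle : Prop :=
  (forall x y z, (x == 1%g) || (y == 1%g) || (z == 1%g) -> omega x y z = 1) /\
  (forall g h x, (g == 1%g) || (h == 1%g) || (x == 1%g) -> gamma g h x = 1) /\
  (forall g x y, (g == 1%g) || (x == 1%g) || (y == 1%g) -> mu g x y = 1) /\
  (forall x y, (x == 1%g) || (y == 1%g) -> c x y = 1).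

(* The algebra H(omega, gamma, mu, c) with basis t_x g, (x,g) in X * G,      *)
(* in coordinates w.r.t. this basis (basis index p = (x, g)).                *)
(* (t_x g)(t_y h) = delta_{x, ^h y} gamma_{g,h}(y)^{-1} t_y (gh) *)
Definition Hm (p q r : X * G) : K :=
  if [&& p.1 == act q.2 q.1, r.1 == q.1 & r.2 == (p.2 * q.2)%g]
  then (gamma p.2 q.2 q.1)^-1 else 0.
Definition Hu (r : X * G) : K := if r.2 == 1%g then 1 else 0.
(* Delta(t_x g) = sum_{ab = x} mu_g(a,b) t_a g (x) t_b g *)
Definition Hdl (p q r : X * G) : K :=
  if [&& q.2 == p.2, r.2 == p.2 & (q.1 * r.1)%g == p.1]
  then mu p.2 q.1 r.1 else 0.
Definition He (p : X * G) : K := if p.1 == 1%g then 1 else 0.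
Definition HPhi (p q r : X * G) : K :=
  if [&& p.2 == 1%g, q.2 == 1%g & r.2 == 1%g]
  then omega p.1 q.1 r.1 else 0.
Definition Halpha : X * G -> K := Hu.
Definition Hbeta (p : X * G) : K :=
  if p.2 == 1%g then omega (p.1^-1)%g p.1 (p.1^-1)%g else 0.
(* S(t_x g) = gamma_{g^-1,g}(x^-1)/mu_g(x,x^-1) t_{^g(x^-1)} g^-1 *)
Definition HS (p q : X * G) : K :=
  if (q.1 == act p.2 (p.1^-1)%g) && (q.2 == (p.2^-1)%g)
  then gamma (p.2^-1)%g p.2 (p.1^-1)%g / mu p.2 p.1 (p.1^-1)%g else 0.
(* R = sum_{x,y} c(x,y) t_x e (x) t_y d(x) *)
Definition HR (p q : X * G) : K :=
  if (p.2 == 1%g) && (q.2 == d p.1) then c p.1 q.1 else 0.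

End CrossedModule.

(* Main.v *)
Require Import Defs.
From HB Require Import structures.
From mathcomp Require Import all_boot all_order all_algebra all_fingroup.
From mathcomp Require Import ring.
From Stdlib Require Import FunctionalExtensionality.
Import GRing.Theory.
Local Open Scope ring_scope.
Set Implicit Arguments. Unset Strict Implicit. Unset Printing Implicit Defensive.

Section Gen.
Variable K : fieldType.

Lemma sum_collapse (T : finType) (a : T) (F : T -> K) :
  (forall t, t != a -> F t = 0) -> \sum_t F t = F a.
Proof.
move=> H; rewrite (bigD1 a) //= big1 ?addr0 // => t /H //.
Qed.

Lemma sumB (X G : finType) (F : X * G -> K) :
  \sum_p F p = \sum_x \sum_g F (x, g).
Proof. by rewrite pair_bigA; apply: eq_bigr => -[]. Qed.

Lemma sum_reindexM (G : finGroupType) (a : G) (F : G -> K) :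
  \sum_h F h = \sum_h F (h * a)%g.
Proof.
by rewrite (reindex_inj (mulIg a)).
Qed.
Lemma perm3 (a x y z : K) : a * x * y * z = a * z * y * x.
Proof. by ring. Qed.
Lemma perm4 (a x y z w : K) : a * x * y * z * w = a * w * z * y * x.
Proof. by ring. Qed.
Lemma sum_pull2 (A B C : finType) (F : A -> B -> C -> K) :
  \sum_a \sum_b \sum_c F a b c = \sum_c \sum_a \sum_b F a b c.
Proof. by under eq_bigr => a _ do rewrite exchange_big; rewrite exchange_big. Qed.
Lemma sum_pull3 (A B C E : finType) (F : A -> B -> C -> E -> K) :
  \sum_a \sum_b \sum_c \sum_e F a b c e = \sum_e \sum_a \sum_b \sum_c F a b c e.
Proof. by under eq_bigr => a _ do rewrite sum_pull2; rewrite exchange_big. Qed.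
Lemma alg_d (F G' x y z M1 M2 M3 : K) : x != 0 -> y != 0 -> z != 0 -> M2 != 0 -> M3 != 0 ->
  x * y / z = M1 * M2 / M3 -> F * G' * z^-1 * M3 = F * M1 * (G' * M2) * x^-1 * y^-1.
Proof.
move=> hx hy hz h2 h3 e.
have -> : M1 = x * y / z * M3 / M2 by rewrite e; field; rewrite h2 h3.
by field; rewrite hx hy hz h2.
Qed.
Lemma alg_c (F P Q R S W V : K) : R != 0 -> S != 0 -> V != 0 ->
  P * Q / (R * S) = W / V -> F * Q * P = W * (F * R * S) / V.
Proof.
move=> hR hS hV e.
have e' : P * Q = W / V * (R * S) by rewrite -e; field; rewrite hR hS.
by rewrite -mulrA [Q * P]mulrC e'; field; rewrite hV.
Qed.
Lemma alg_w (A Bq M P Mh Q Ma Gx Gxi C : K) : M != 0 -> Mh != 0 -> Ma != 0 ->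
  Gx * Gxi = Ma * Mh / M -> Gxi * A = P * C -> Q = C * Bq ->
  A / M * Bq = P / Mh * (Q / Ma) * Gx.
Proof.
move=> hM hMh hMa hd hb1 hb2.
have hM' : M^-1 = Gx * Gxi / (Ma * Mh) by rewrite hd; field; rewrite hM hMh hMa.
rewrite hb2 hM'.
transitivity ((Gxi * A) * Gx * Bq / (Ma * Mh)); first by field; rewrite hMa hMh.
by rewrite hb1; field; rewrite hMa hMh.
Qed.
Lemma alg_div (W1 W2 W3 G1 G2 : K) : G1 != 0 -> G2 != 0 ->
  W1 * G1 = W2 * W3 * G2 -> G2^-1 * W1 = W2 * W3 * G1^-1.
Proof.
move=> h1 h2 e.
have -> : W1 = W2 * W3 * G2 / G1 by rewrite -e; field; rewrite h1.
by field; rewrite h1 h2.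
Qed.
Lemma sum_reindexV (G : finGroupType) (F : G -> K) :
  \sum_h F h = \sum_h F (h^-1)%g.
Proof. by rewrite (reindex_inj invg_inj). Qed.
Lemma alg_b (F Mv Mw W V Gm : K) : Mw != 0 -> V != 0 -> Gm != 0 ->
  Mv / Mw = W / V -> F * Mv * (V * (Gm / Mw) * Gm^-1) = F * W.
Proof.
move=> h1 h2 h3 E.
have -> : Mv = W / V * Mw by rewrite -E; field; rewrite h1.
by field; rewrite h1 h2 h3.
Qed.
Lemma alg_R (F Mb C1 M1 G1 G2 C0 G3 G4 : K) :
  C0 != 0 -> M1 != 0 -> G1 != 0 -> G3 != 0 -> G4 != 0 ->
  C1 / C0 = Mb / M1 * (G1 / G4) -> G2 = G3 * G4 ->
  F * Mb = C1 * (F * M1) * G1^-1 * (G2 / C0) * G3^-1.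
Proof.
move=> h0 h1 h2 h3 h4 E1 E2.
have -> : C1 = Mb / M1 * (G1 / G4) * C0 by rewrite -E1; field; rewrite h0.
by rewrite E2; field; rewrite h0 h1 h2 h3 h4.
Qed.
End Gen.
Arguments sum_collapse {K T} a {F} _.
Arguments alg_R {K F Mb C1 M1 G1 G2 C0 G3 G4}.

Set Implicit Arguments. Unset Strict Implicit. Unset Printing Implicit Defensive.

Section Main.
Variables (K : fieldType) (G X : finGroupType)
  (act : G -> X -> X) (d : X -> G)
  (omega : X -> X -> X -> K) (gamma : G -> G -> X -> K)
  (mu : G -> X -> X -> K) (c : X -> X -> K).
Hypothesis HCM : crossed_module act d.
Hypothesis HQ : quasi_abelian_3cocycle act d omega gamma mu c.
Hypothesis HN : normalized_cocycle omega gamma mu c.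

Lemma act1 x : act 1 x = x. Proof. by case: HCM. Qed.
Lemma actM g h x : act (g * h)%g x = act g (act h x). Proof. by case: HCM => _ []. Qed.
Lemma actMx g x y : act g (x * y)%g = (act g x * act g y)%g. Proof. by case: HCM => _ [_ []]. Qed.
Lemma dM x y : d (x * y)%g = (d x * d y)%g. Proof. by case: HCM => _ [_ [_ []]]. Qed.
Lemma act_d x y : act (d x) y = (x * y * x^-1)%g. Proof. by case: HCM => _ [_ [_ [_ []]]]. Qed.
Lemma d_act g x : d (act g x) = (g * d x * g^-1)%g. Proof. by case: HCM => _ [_ [_ [_ []]]]. Qed.
Lemma actx1 g : act g 1%g = 1%g.
Proof. have h := actMx g 1 1; rewrite mulg1 in h. by apply: (mulgI (act g 1)); rewrite -h mulg1. Qed.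
Lemma actV g x : act g x^-1%g = (act g x)^-1%g.
Proof. by apply: (mulgI (act g x)); rewrite -actMx !mulgV actx1. Qed.
Lemma actK g x : act g^-1%g (act g x) = x.
Proof. by rewrite -actM mulVg act1. Qed.
Lemma actKV g x : act g (act g^-1%g x) = x.
Proof. by rewrite -actM mulgV act1. Qed.
Lemma d1 : d 1%g = 1%g.
Proof. have h := dM 1 1; rewrite mulg1 in h. by apply: (mulgI (d 1)); rewrite -h mulg1. Qed.
Lemma dV x : d x^-1%g = (d x)^-1%g.
Proof. by apply: (mulgI (d x)); rewrite -dM !mulgV d1. Qed.

Lemma om_nz x y z : omega x y z != 0. Proof. by case: HQ. Qed.
Lemma gam_nz g h x : gamma g h x != 0. Proof. by case: HQ => _ []. Qed.
Lemma mu_nz g x y : mu g x y != 0. Proof. by case: HQ => _ [_ []]. Qed.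
Lemma c_nz x y : c x y != 0. Proof. by case: HQ => _ [_ [_ []]]. Qed.
Lemma om_a w x y z : omega x y z * omega w (x * y)%g z * omega w x y
                   = omega w x (y * z)%g * omega (w * x)%g y z.
Proof. by case: HQ => _ [_ [_ [_ []]]]. Qed.
Lemma gam_b g h k x : gamma h k x * gamma g (h * k)%g x
                   = gamma (g * h)%g k x * gamma g h (act k x).
Proof. by case: HQ => _ [_ [_ [_ [_ []]]]]. Qed.
Lemma mu_c g x y z : mu g y z * mu g x (y * z)%g / (mu g (x * y)%g z * mu g x y)
                   = omega (act g x) (act g y) (act g z) / omega x y z.
Proof. by case: HQ => _ [_ [_ [_ [_ [_ []]]]]]. Qed.
Lemma gam_d g h x y : gamma g h x * gamma g h y / gamma g h (x * y)%g
                   = mu g (act h x) (act h y) * mu h x y / mu (g * h)%g x y.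
Proof. by case: HQ => _ [_ [_ [_ [_ [_ [_ []]]]]]]. Qed.
Lemma c_e g x y : c (act g x) (act g y) / c x y
       = mu g (x * y * x^-1)%g x / mu g x y *
         (gamma (g * d x * g^-1)%g g y / gamma g (d x) y).
Proof. by case: HQ => _ [_ [_ [_ [_ [_ [_ [_ []]]]]]]]. Qed.
Lemma c_f x y z : c (x * y)%g z
       = omega x y z * omega ((x * y) * z * (x * y)^-1)%g x y /
         (omega x (y * z * y^-1)%g y * gamma (d x) (d y) z) *
         c x (y * z * y^-1)%g * c y z.
Proof. by case: HQ => _ [_ [_ [_ [_ [_ [_ [_ [_ []]]]]]]]]. Qed.
Lemma c_g x y z : c x (y * z)%g
       = omega (x * y * x^-1)%g x z /
         (omega x y z * omega (x * y * x^-1)%g (x * z * x^-1)%g x *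
          mu (d x) y z) * c x y * c x z.
Proof. by case: HQ => _ [_ [_ [_ [_ [_ [_ [_ [_ []]]]]]]]]. Qed.

Lemma om1l y z : omega 1 y z = 1. Proof. by case: HN => H _; apply: H; rewrite eqxx. Qed.
Lemma om1m x z : omega x 1 z = 1. Proof. by case: HN => H _; apply: H; rewrite eqxx orbT. Qed.
Lemma om1r x y : omega x y 1 = 1. Proof. by case: HN => H _; apply: H; rewrite eqxx !orbT. Qed.
Lemma gam1l h x : gamma 1 h x = 1. Proof. by case: HN => _ [H _]; apply: H; rewrite eqxx. Qed.
Lemma gam1m g x : gamma g 1 x = 1. Proof. by case: HN => _ [H _]; apply: H; rewrite eqxx orbT. Qed.
Lemma gam1r g h : gamma g h 1 = 1. Proof. by case: HN => _ [H _]; apply: H; rewrite eqxx !orbT. Qed.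
Lemma mu1l x y : mu 1 x y = 1. Proof. by case: HN => _ [_ [H _]]; apply: H; rewrite eqxx. Qed.
Lemma mu1m g y : mu g 1 y = 1. Proof. by case: HN => _ [_ [H _]]; apply: H; rewrite eqxx orbT. Qed.
Lemma mu1r g x : mu g x 1 = 1. Proof. by case: HN => _ [_ [H _]]; apply: H; rewrite eqxx !orbT. Qed.
Lemma c1l y : c 1 y = 1. Proof. by case: HN => _ [_ [_ H]]; apply: H; rewrite eqxx. Qed.
Lemma c1r x : c x 1 = 1. Proof. by case: HN => _ [_ [_ H]]; apply: H; rewrite eqxx orbT. Qed.

Lemma gam_inv g y : gamma g g^-1%g (act g y) = gamma g^-1%g g y.
Proof. by have := gam_b g g^-1 g y; rewrite mulVg mulgV gam1m gam1l mulr1 mul1r. Qed.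

Local Notation B := (X * G)%type.
Local Notation m := (Hm act gamma).

Definition lft (h : G) (r : B) : B := (act h r.1, r.2 * h^-1)%g.
Definition rgt (h : G) (r : B) : B := (r.1, h).
Definition gw (h : G) (r : B) : K := (gamma (r.2 * h^-1)%g h r.1)^-1.

Lemma HmE p q r : m p q r =
  if p == (act q.2 q.1, r.2 * q.2^-1)%g then
    (if r.1 == q.1 then (gamma p.2 q.2 q.1)^-1 else 0) else 0.
Proof.
case: p => x g; case: q => y h; case: r => z k; rewrite /Hm /= xpair_eqE.
rewrite (eq_sym g) divg_eq.
by case: (x == _); case: (z == _); case: (k == _).
Qed.

Lemma sum_Hm (F : B -> B -> K) r :
  \sum_p \sum_q F p q * m p q r = \sum_h F (lft h r) (rgt h r) * gw h r.
Proof.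
rewrite exchange_big /=.
rewrite (eq_bigr (fun q => F (act q.2 q.1, r.2 * q.2^-1)%g q *
        (if r.1 == q.1 then (gamma (r.2 * q.2^-1)%g q.2 q.1)^-1 else 0))); last first.
  move=> q _; rewrite (sum_collapse (act q.2 q.1, r.2 * q.2^-1)%g).
    by rewrite HmE eqxx.
  by move=> p /negbTE hp; rewrite HmE hp mulr0.
rewrite sumB exchange_big /=; apply: eq_bigr => h _.
rewrite (sum_collapse r.1) ?eqxx //.
by move=> y /negbTE hy; rewrite eq_sym hy mulr0.
Qed.

Lemma mulHE f g r : mulH m f g r = \sum_h f (lft h r) * g (rgt h r) * gw h r.
Proof.
rewrite /mulH -(sum_Hm (fun p q => f p * g q)).
by apply: eq_bigr => p _; apply: eq_bigr.
Qed.

Lemma mul2E F G' r1 r2 : mul2 m F G' r1 r2 =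
  \sum_h1 \sum_h2 F (lft h1 r1) (lft h2 r2) * G' (rgt h1 r1) (rgt h2 r2)
     * gw h1 r1 * gw h2 r2.
Proof.
rewrite /mul2.
transitivity (\sum_p1 \sum_q1 (\sum_p2 \sum_q2
    F p1 p2 * G' q1 q2 * m p2 q2 r2) * m p1 q1 r1).
  apply: eq_bigr => p1 _; rewrite exchange_big; apply: eq_bigr => q1 _.
  rewrite big_distrl; apply: eq_bigr => p2 _; rewrite big_distrl.
  by apply: eq_bigr => q2 _; rewrite mulrAC.
rewrite sum_Hm; apply: eq_bigr => h1 _.
rewrite sum_Hm big_distrl; apply: eq_bigr => h2 _.
by rewrite [RHS]mulrAC.
Qed.

Lemma mul3E F G' r1 r2 r3 : mul3 m F G' r1 r2 r3 =
  \sum_h1 \sum_h2 \sum_h3 F (lft h1 r1) (lft h2 r2) (lft h3 r3) *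
     G' (rgt h1 r1) (rgt h2 r2) (rgt h3 r3) * gw h1 r1 * gw h2 r2 * gw h3 r3.
Proof.
rewrite /mul3.
transitivity (\sum_p1 \sum_q1 (\sum_p2 \sum_q2 (\sum_p3 \sum_q3
    F p1 p2 p3 * G' q1 q2 q3 * m p3 q3 r3) * m p2 q2 r2) * m p1 q1 r1).
  apply: eq_bigr => p1 _; rewrite sum_pull2; apply: eq_bigr => q1 _.
  rewrite big_distrl; apply: eq_bigr => p2 _; rewrite exchange_big [RHS]big_distrl.
  apply: eq_bigr => q2 _; rewrite !big_distrl; apply: eq_bigr => p3 _.
  rewrite !big_distrl; apply: eq_bigr => q3 _; exact: perm3.
rewrite sum_Hm; apply: eq_bigr => h1 _.
rewrite sum_Hm big_distrl; apply: eq_bigr => h2 _.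
rewrite sum_Hm !big_distrl; apply: eq_bigr => h3 _.
exact: perm3.
Qed.

Lemma mul4E F G' r1 r2 r3 r4 : mul4 m F G' r1 r2 r3 r4 =
  \sum_h1 \sum_h2 \sum_h3 \sum_h4
     F (lft h1 r1) (lft h2 r2) (lft h3 r3) (lft h4 r4) *
     G' (rgt h1 r1) (rgt h2 r2) (rgt h3 r3) (rgt h4 r4) *
     gw h1 r1 * gw h2 r2 * gw h3 r3 * gw h4 r4.
Proof.
rewrite /mul4.
transitivity (\sum_p1 \sum_q1 (\sum_p2 \sum_q2 (\sum_p3 \sum_q3 (\sum_p4 \sum_q4
    F p1 p2 p3 p4 * G' q1 q2 q3 q4 * m p4 q4 r4) * m p3 q3 r3)
       * m p2 q2 r2) * m p1 q1 r1).
  apply: eq_bigr => p1 _; rewrite sum_pull3; apply: eq_bigr => q1 _.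
  rewrite big_distrl; apply: eq_bigr => p2 _; rewrite sum_pull2 [RHS]big_distrl.
  apply: eq_bigr => q2 _; rewrite !big_distrl; apply: eq_bigr => p3 _.
  rewrite exchange_big !big_distrl; apply: eq_bigr => q3 _.
  rewrite !big_distrl; apply: eq_bigr => p4 _.
  rewrite !big_distrl; apply: eq_bigr => q4 _; exact: perm4.
rewrite sum_Hm; apply: eq_bigr => h1 _.
rewrite sum_Hm big_distrl; apply: eq_bigr => h2 _.
rewrite sum_Hm !big_distrl; apply: eq_bigr => h3 _.
rewrite sum_Hm !big_distrl; apply: eq_bigr => h4 _.
exact: perm4.
Qed.

Lemma lft1 r : lft 1 r = r.
Proof. by case: r => x g; rewrite /lft /= act1 invg1 mulg1. Qed.
Lemma gw1 r : gw 1 r = 1.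
Proof. by rewrite /gw gam1m invr1. Qed.
Lemma rgtK r : rgt r.2 r = r. Proof. by case: r. Qed.
Lemma lftK r : lft r.2 r = (act r.2 r.1, 1%g). Proof. by rewrite /lft mulgV. Qed.
Lemma gwK r : gw r.2 r = 1. Proof. by rewrite /gw mulgV gam1l invr1. Qed.

Lemma DeltaE f q r : DeltaH (Hdl mu) f q r =
  if r.2 == q.2 then f (q.1 * r.1, q.2)%g * mu q.2 q.1 r.1 else 0.
Proof.
rewrite /DeltaH (sum_collapse (q.1 * r.1, q.2)%g).
  by rewrite /Hdl /= !eqxx /= andbT; case: ifP; rewrite ?mulr0.
move=> -[x g] hne; rewrite /Hdl /=.
case: ifP => [/and3P [/eqP e1 _ /eqP e3]|]; last by rewrite mulr0.
by move: hne; rewrite e1 e3 eqxx.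
Qed.

Lemma epsE f : epsH (@He K G X) f = \sum_g f (1%g, g).
Proof.
rewrite /epsH sumB (sum_collapse 1%g) => [|x hx].
  by apply: eq_bigr => g _; rewrite /He /= eqxx mulr1.
by apply: big1 => g _; rewrite /He /= (negbTE hx) mulr0.
Qed.

Definition tau (p : B) : B := (act p.2 p.1^-1, p.2^-1)%g.
Definition wS (p : B) : K := gamma p.2^-1%g p.2 p.1^-1%g / mu p.2 p.1 p.1^-1%g.

Lemma tauK : involutive tau.
Proof. by case=> x g; rewrite /tau /= invgK -actV invgK actK. Qed.

Lemma HSE p q : HS act gamma mu p q = if q == tau p then wS p else 0.
Proof. by case: p => x g; case: q => y h; rewrite /HS /tau /= xpair_eqE. Qed.

Lemma SHE f q : SH (HS act gamma mu) f q = f (tau q) * wS (tau q).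
Proof.
rewrite /SH (sum_collapse (tau q)); first by rewrite HSE tauK eqxx.
move=> p hp; rewrite HSE; case: eqP => [e|]; last by rewrite mulr0.
by move: hp; rewrite e tauK eqxx.
Qed.

Lemma wS_nz p : wS p != 0.
Proof. by rewrite /wS mulf_neq0 ?invr_eq0 ?gam_nz ?mu_nz. Qed.

Definition esupp3 (F : B -> B -> B -> K) :=
  forall p q r, F p q r != 0 -> [&& p.2 == 1%g, q.2 == 1%g & r.2 == 1%g].

Lemma mul3_re F G' r1 r2 r3 : esupp3 G' ->
  mul3 m F G' r1 r2 r3 = F r1 r2 r3 * G' (r1.1, 1%g) (r2.1, 1%g) (r3.1, 1%g).
Proof.
move=> H; rewrite mul3E.
rewrite (sum_collapse 1%g) => [|h1 hh]; last first.
  apply: big1 => h2 _; apply: big1 => h3 _.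
  have /eqP ->: G' (rgt h1 r1) (rgt h2 r2) (rgt h3 r3) == 0.
    by apply/negPn/negP => /H /and3P [/= e _ _]; move: hh; rewrite e.
  by rewrite !(mulr0, mul0r).
rewrite (sum_collapse 1%g) => [|h2 hh]; last first.
  apply: big1 => h3 _.
  have /eqP ->: G' (rgt 1 r1) (rgt h2 r2) (rgt h3 r3) == 0.
    by apply/negPn/negP => /H /and3P [_ /= e _]; move: hh; rewrite e.
  by rewrite !(mulr0, mul0r).
rewrite (sum_collapse 1%g) => [|h3 hh]; last first.
  have /eqP ->: G' (rgt 1 r1) (rgt 1 r2) (rgt h3 r3) == 0.
    by apply/negPn/negP => /H /and3P [_ _ /= e]; move: hh; rewrite e.
  by rewrite !(mulr0, mul0r).
by rewrite !lft1 !gw1 !mulr1.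
Qed.

Lemma mul3_le F G' r1 r2 r3 : esupp3 F ->
  mul3 m F G' r1 r2 r3 = F (act r1.2 r1.1, 1%g) (act r2.2 r2.1, 1%g) (act r3.2 r3.1, 1%g) * G' r1 r2 r3.
Proof.
move=> H; rewrite mul3E.
have hne (h : G) r : h != r.2 -> (lft h r).2 != 1%g.
  by move=> hh; rewrite /= divg_eq1 eq_sym.
rewrite (sum_collapse r1.2) => [|h1 hh]; last first.
  apply: big1 => h2 _; apply: big1 => h3 _.
  have /eqP ->: F (lft h1 r1) (lft h2 r2) (lft h3 r3) == 0.
    by apply/negPn/negP => /H /and3P [e _ _]; move: (hne _ _ hh); rewrite e.
  by rewrite !(mulr0, mul0r).
rewrite (sum_collapse r2.2) => [|h2 hh]; last first.
  apply: big1 => h3 _.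
  have /eqP ->: F (lft r1.2 r1) (lft h2 r2) (lft h3 r3) == 0.
    by apply/negPn/negP => /H /and3P [_ e _]; move: (hne _ _ hh); rewrite e.
  by rewrite !(mulr0, mul0r).
rewrite (sum_collapse r3.2) => [|h3 hh]; last first.
  have /eqP ->: F (lft r1.2 r1) (lft r2.2 r2) (lft h3 r3) == 0.
    by apply/negPn/negP => /H /and3P [_ _ e]; move: (hne _ _ hh); rewrite e.
  by rewrite !(mulr0, mul0r).
by rewrite !lftK !rgtK !gwK !mulr1.
Qed.

Lemma lft_lft h' h2 r : lft (h' * h2^-1) (lft h2 r) = lft h' r.
Proof.
by rewrite /lft /= -actM mulgVK invgM invgK mulgA mulgVK.
Qed.

Lemma gw_assoc h' h2 r :
  gw (h' * h2^-1) (lft h2 r) * gw h2 r = gw h2 (rgt h' r) * gw h' r.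
Proof.
rewrite /gw /= -!invfM; congr (_^-1).
have := gam_b (r.2 * h'^-1) (h' * h2^-1) h2 r.1.
rewrite mulgVK !mulgA mulgVK invgM invgK mulgA mulgVK => ->.
by rewrite mulrC.
Qed.

Lemma mulH_assoc f g h :
  mulH m (mulH m f g) h = mulH m f (mulH m g h).
Proof.
apply: functional_extensionality => r.
rewrite !mulHE.
under [RHS]eq_bigr => h' _ do rewrite mulHE mulr_sumr mulr_suml.
rewrite [RHS]exchange_big /=; apply: eq_bigr => h2 _.
rewrite mulHE !mulr_suml (sum_reindexM h2^-1); apply: eq_bigr => h' _.
rewrite lft_lft /rgt /=.
have := gw_assoc h' h2 r; rewrite /rgt /= => e.
set a := gw _ _; set b := gw h2 r; set c0 := gw h2 _; set e' := gw h' r.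
move: e; rewrite -/a -/b -/c0 -/e' => e.
transitivity (f (lft h' r) * g (act h2 r.1, h' * h2^-1)%g * h (r.1, h2) * (a * b)).
  by ring.
by rewrite e /lft /=; ring.
Qed.

Lemma mulH1 f : mulH m f (@Hu K G X) = f.
Proof.
apply: functional_extensionality => r.
rewrite mulHE (sum_collapse 1%g) => [|h hh].
  by rewrite lft1 gw1 /Hu /= eqxx !mulr1.
by rewrite /Hu /= (negbTE hh) mulr0 mul0r.
Qed.

Lemma mul1H f : mulH m (@Hu K G X) f = f.
Proof.
apply: functional_extensionality => r.
rewrite mulHE (sum_collapse r.2) => [|h hh].
  by rewrite lftK rgtK gwK /Hu /= eqxx mul1r mulr1.
by rewrite /Hu /= divg_eq1 eq_sym (negbTE hh) !mul0r.
Qed.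

Local Notation dl := (Hdl mu).
Local Notation u := (@Hu K G X).
Local Notation e := (@He K G X).
Local Notation Phi := (HPhi omega).
Definition Phii (p q r : B) : K :=
  if [&& p.2 == 1%g, q.2 == 1%g & r.2 == 1%g]
  then (omega p.1 q.1 r.1)^-1 else 0.

Lemma Delta_mul f g : DeltaH dl (mulH m f g) = mul2 m (DeltaH dl f) (DeltaH dl g).
Proof.
apply: functional_extensionality => q; apply: functional_extensionality => r.
rewrite mul2E DeltaE.
rewrite (eq_bigr (fun h1 => DeltaH dl f (lft h1 q) (lft h1 r) *
   DeltaH dl g (rgt h1 q) (rgt h1 r) * gw h1 q * gw h1 r)); last first.
  move=> h1 _; rewrite (sum_collapse h1) // => h2 hh.
  by rewrite [DeltaH _ g _ _]DeltaE /= (negbTE hh) mulr0 !mul0r.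
case: (r.2 =P q.2) => [er | ne].
  rewrite mulHE mulr_suml; apply: eq_bigr => h _.
  rewrite !DeltaE /= er !eqxx /lft /rgt /gw /= actMx er.
  apply: alg_d; rewrite ?gam_nz ?mu_nz //.
  by rewrite gam_d mulgVK.
apply/esym/big1 => h _; rewrite DeltaE /= (inj_eq (mulIg _)).
by rewrite (introF eqP ne) !mul0r.
Qed.

Lemma Delta_one : DeltaH dl u = one2 u.
Proof.
apply: functional_extensionality => q; apply: functional_extensionality => r.
rewrite DeltaE /one2 /Hu /=.
case: (r.2 =P q.2) => [->|ne].
  by case: (q.2 =P 1%g) => [->|]; rewrite ?mu1l ?mulr1 ?mul0r.
by case: (q.2 =P 1%g) => [e1|]; case: (r.2 =P 1%g) => [e2|]; rewrite ?mulr0 ?mul0r //;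
  case: ne; rewrite e1 e2.
Qed.

Lemma eps_mul f g : epsH e (mulH m f g) = epsH e f * epsH e g.
Proof.
rewrite !epsE mulr_sumr.
under eq_bigr => k _ do rewrite mulHE.
rewrite exchange_big /=; apply: eq_bigr => h _.
rewrite mulr_suml (sum_reindexM h); apply: eq_bigr => k _.
by rewrite /lft /rgt /gw /= actx1 mulgK gam1r invr1 mulr1.
Qed.

Lemma eps_one : epsH e u = 1.
Proof.
rewrite epsE (sum_collapse 1%g) => [|g hg]; first by rewrite /Hu eqxx.
by rewrite /Hu /= (negbTE hg).
Qed.

Lemma esupp_Phi : esupp3 Phi.
Proof. by move=> p q r; rewrite /HPhi; case: ifP => //; rewrite eqxx. Qed.
Lemma esupp_Phii : esupp3 Phii.
Proof. by move=> p q r; rewrite /Phii; case: ifP => //; rewrite eqxx. Qed.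

Lemma Phi_Phii : mul3 m Phi Phii = one3 u.
Proof.
apply: functional_extensionality => r1; apply: functional_extensionality => r2.
apply: functional_extensionality => r3.
rewrite mul3_re; last exact: esupp_Phii.
rewrite /HPhi /Phii /one3 /Hu /= ?eqxx /=.
by case: (r1.2 == 1%g); case: (r2.2 == 1%g); case: (r3.2 == 1%g);
  rewrite ?mulr0 ?mul0r ?mulfV ?om_nz ?mulr1.
Qed.

Lemma Phii_Phi : mul3 m Phii Phi = one3 u.
Proof.
apply: functional_extensionality => r1; apply: functional_extensionality => r2.
apply: functional_extensionality => r3.
rewrite mul3_re; last exact: esupp_Phi.
rewrite /HPhi /Phii /one3 /Hu /= ?eqxx /=.
by case: (r1.2 == 1%g); case: (r2.2 == 1%g); case: (r3.2 == 1%g);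
  rewrite ?mulr0 ?mul0r ?mulVf ?om_nz ?mulr1.
Qed.


Lemma id_DE F s1 s2 s3 : id_D dl F s1 s2 s3 =
  if s3.2 == s2.2 then F s1 (s2.1 * s3.1, s2.2)%g * mu s2.2 s2.1 s3.1 else 0.
Proof. exact: (DeltaE (F s1) s2 s3). Qed.
Lemma D_idE F s1 s2 s3 : D_id dl F s1 s2 s3 =
  if s2.2 == s1.2 then F (s1.1 * s2.1, s1.2)%g s3 * mu s1.2 s1.1 s2.1 else 0.
Proof. exact: (DeltaE (fun p => F p s3) s1 s2). Qed.
Lemma id_id_DE F s1 s2 s3 s4 : id_id_D dl F s1 s2 s3 s4 =
  if s4.2 == s3.2 then F s1 s2 (s3.1 * s4.1, s3.2)%g * mu s3.2 s3.1 s4.1 else 0.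
Proof. exact: (DeltaE (F s1 s2) s3 s4). Qed.
Lemma id_D_idE F s1 s2 s3 s4 : id_D_id dl F s1 s2 s3 s4 =
  if s3.2 == s2.2 then F s1 (s2.1 * s3.1, s2.2)%g s4 * mu s2.2 s2.1 s3.1 else 0.
Proof. exact: (DeltaE (fun p => F s1 p s4) s2 s3). Qed.
Lemma D_id_idE F s1 s2 s3 s4 : D_id_id dl F s1 s2 s3 s4 =
  if s2.2 == s1.2 then F (s1.1 * s2.1, s1.2)%g s3 s4 * mu s1.2 s1.1 s2.1 else 0.
Proof. exact: (DeltaE (fun p => F p s3 s4) s1 s2). Qed.

Lemma qcoassoc f : id_D dl (DeltaH dl f) =
  mul3 m (mul3 m Phi (D_id dl (DeltaH dl f))) Phii.
Proof.
apply: functional_extensionality => r1; apply: functional_extensionality => r2.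
apply: functional_extensionality => r3.
rewrite mul3_re; last exact: esupp_Phii.
rewrite mul3_le; last exact: esupp_Phi.
rewrite id_DE D_idE !DeltaE /HPhi /Phii /= ?eqxx /=.
case: r1 r2 r3 => [a g1] [b g2] [c0 g3] /=.
case: (g2 =P g1) => [->|ne2]; case: (g3 =P g1) => [->|ne3];
  rewrite ?eqxx ?mul0r ?mulr0 ?if_same //=.
  rewrite mulgA; apply: alg_c; rewrite ?mu_nz ?om_nz //.
  exact: (mu_c g1 a b c0). all: by rewrite mul0r.
Qed.

Definition esupp4 (F : B -> B -> B -> B -> K) :=
  forall p q r s, F p q r s != 0 ->
    [&& p.2 == 1%g, q.2 == 1%g, r.2 == 1%g & s.2 == 1%g].

Lemma mul4_re F G' r1 r2 r3 r4 : esupp4 G' ->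
  mul4 m F G' r1 r2 r3 r4 =
  F r1 r2 r3 r4 * G' (r1.1, 1%g) (r2.1, 1%g) (r3.1, 1%g) (r4.1, 1%g).
Proof.
move=> H; rewrite mul4E.
rewrite (sum_collapse 1%g) => [|h1 hh]; last first.
  apply: big1 => h2 _; apply: big1 => h3 _; apply: big1 => h4 _.
  have /eqP ->: G' (rgt h1 r1) (rgt h2 r2) (rgt h3 r3) (rgt h4 r4) == 0.
    by apply/negPn/negP => /H /and4P [/= e _ _ _]; move: hh; rewrite e.
  by rewrite !(mulr0, mul0r).
rewrite (sum_collapse 1%g) => [|h2 hh]; last first.
  apply: big1 => h3 _; apply: big1 => h4 _.
  have /eqP ->: G' (rgt 1 r1) (rgt h2 r2) (rgt h3 r3) (rgt h4 r4) == 0.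
    by apply/negPn/negP => /H /and4P [_ /= e _ _]; move: hh; rewrite e.
  by rewrite !(mulr0, mul0r).
rewrite (sum_collapse 1%g) => [|h3 hh]; last first.
  apply: big1 => h4 _.
  have /eqP ->: G' (rgt 1 r1) (rgt 1 r2) (rgt h3 r3) (rgt h4 r4) == 0.
    by apply/negPn/negP => /H /and4P [_ _ /= e _]; move: hh; rewrite e.
  by rewrite !(mulr0, mul0r).
rewrite (sum_collapse 1%g) => [|h4 hh]; last first.
  have /eqP ->: G' (rgt 1 r1) (rgt 1 r2) (rgt 1 r3) (rgt h4 r4) == 0.
    by apply/negPn/negP => /H /and4P [_ _ _ /= e]; move: hh; rewrite e.
  by rewrite !(mulr0, mul0r).
by rewrite !lft1 !gw1 !mulr1.
Qed.

Ltac kill g n := repeat match goal with |- context [@eq_op ?T g ?o] =>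
  rewrite (_ : @eq_op T g o = false); last by apply/negbTE; exact: n end;
  repeat match goal with |- context [@eq_op ?T ?o g] =>
  rewrite (_ : @eq_op T o g = false); last by rewrite eq_sym; apply/negbTE; exact: n end.
Ltac gcase g := let n := fresh "n" in let e := fresh "e" in
  have [e|n] := eqVneq g 1%g; [rewrite ?e | kill g n].

Lemma D_id_id_Phi s1 s2 s3 s4 : D_id_id dl Phi s1 s2 s3 s4 =
  if [&& s1.2 == 1%g, s2.2 == 1%g, s3.2 == 1%g & s4.2 == 1%g]
  then omega (s1.1 * s2.1)%g s3.1 s4.1 else 0.
Proof.
rewrite D_id_idE /HPhi; case: s1 s2 s3 s4 => [x1 g1] [x2 g2] [x3 g3] [x4 g4] /=.
gcase g1; gcase g2; rewrite ?eqxx ?mu1l ?mulr1 //= ?mul0r ?if_same //.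
Qed.

Lemma id_id_D_Phi s1 s2 s3 s4 : id_id_D dl Phi s1 s2 s3 s4 =
  if [&& s1.2 == 1%g, s2.2 == 1%g, s3.2 == 1%g & s4.2 == 1%g]
  then omega s1.1 s2.1 (s3.1 * s4.1)%g else 0.
Proof.
rewrite id_id_DE /HPhi; case: s1 s2 s3 s4 => [x1 g1] [x2 g2] [x3 g3] [x4 g4] /=.
gcase g3; gcase g4; rewrite ?eqxx ?mu1l ?mulr1 ?andbT ?andbF //= ?mul0r ?if_same //.
Qed.

Lemma id_D_id_Phi s1 s2 s3 s4 : id_D_id dl Phi s1 s2 s3 s4 =
  if [&& s1.2 == 1%g, s2.2 == 1%g, s3.2 == 1%g & s4.2 == 1%g]
  then omega s1.1 (s2.1 * s3.1)%g s4.1 else 0.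
Proof.
rewrite id_D_idE /HPhi; case: s1 s2 s3 s4 => [x1 g1] [x2 g2] [x3 g3] [x4 g4] /=.
gcase g2; gcase g3; rewrite ?eqxx ?mu1l ?mulr1 ?andbT ?andbF //= ?mul0r ?if_same //.
Qed.

Lemma pentagon : mul4 m (id_id_D dl Phi) (D_id_id dl Phi) =
  mul4 m (mul4 m (one_tensor u Phi) (id_D_id dl Phi)) (tensor_one u Phi).
Proof.
apply: functional_extensionality => r1; apply: functional_extensionality => r2.
apply: functional_extensionality => r3; apply: functional_extensionality => r4.
rewrite mul4_re; last first.
  by move=> p q r s; rewrite D_id_id_Phi; case: ifP => //; rewrite eqxx.
rewrite mul4_re; last first.
  move=> p q r s; rewrite /tensor_one /HPhi /Hu.
  case: ifP => [/and3P [-> -> ->]|]; last by rewrite mul0r eqxx.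
  by case: ifP => //; rewrite mulr0 eqxx.
rewrite mul4_re; last first.
  by move=> p q r s; rewrite id_D_id_Phi; case: ifP => //; rewrite eqxx.
rewrite id_id_D_Phi D_id_id_Phi id_D_id_Phi /one_tensor /tensor_one /HPhi /Hu /=.
case: r1 r2 r3 r4 => [x1 g1] [x2 g2] [x3 g3] [x4 g4] /=; rewrite ?eqxx /=.
gcase g1; gcase g2; gcase g3; gcase g4; rewrite /= ?mulr0 ?mul0r ?mul1r ?mulr1 //.
by rewrite om_a.
Qed.


Lemma eps_Delta f : eps_id e (DeltaH dl f) = f.
Proof.
apply: functional_extensionality => q.
transitivity (epsH e (fun p => DeltaH dl f p q)); first by [].
rewrite epsE (sum_collapse q.2).
  by rewrite DeltaE /= eqxx mul1g mu1m mulr1; case: q.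
by move=> g hg; rewrite DeltaE /= eq_sym (negbTE hg).
Qed.

Lemma Delta_eps f : id_eps e (DeltaH dl f) = f.
Proof.
apply: functional_extensionality => p.
transitivity (epsH e (fun q => DeltaH dl f p q)); first by [].
rewrite epsE (sum_collapse p.2).
  by rewrite DeltaE /= eqxx mulg1 mu1r mulr1; case: p.
by move=> g hg; rewrite DeltaE /= (negbTE hg).
Qed.

Lemma Phi_eps : id_eps_id e Phi = one2 u.
Proof.
apply: functional_extensionality => p; apply: functional_extensionality => r.
transitivity (epsH e (fun q => Phi p q r)); first by [].
rewrite epsE (sum_collapse 1%g).
  rewrite /HPhi /one2 /Hu /= eqxx om1m.
  by case: (p.2 == 1%g); case: (r.2 == 1%g); rewrite ?mulr0 ?mul0r ?mulr1.
by move=> g hg; rewrite /HPhi /= (negbTE hg) andbF.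
Qed.


Local Notation Sm := (HS act gamma mu).

Definition SHinv (f : B -> K) : B -> K := fun q => f (tau q) / wS q.

Lemma SH_bij : bijective (SH Sm).
Proof.
exists SHinv => f; apply: functional_extensionality => q.
  by rewrite /SHinv SHE tauK mulfK ?wS_nz.
by rewrite SHE /SHinv tauK divfK ?wS_nz.
Qed.

Lemma wS_mul x a h : wS (x, a * h)%g * gamma h^-1%g a^-1%g (act (a * h)%g x^-1%g)
  = wS (x, h) * wS (act h x, a) * gamma a h x.
Proof.
rewrite /wS /=.
have hd : gamma a h x * gamma a h x^-1 =
    mu a (act h x) (act h x)^-1 * mu h x x^-1 / mu (a * h)%g x x^-1.
  by have := gam_d a h x x^-1; rewrite mulgV gam1r divr1 actV.
have hb1 : gamma a h x^-1 * gamma (a * h)^-1 (a * h) x^-1 =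
    gamma h^-1 h x^-1 * gamma (h^-1 * a^-1) a (act h x^-1).
  by rewrite invgM; have := gam_b (h^-1 * a^-1) a h x^-1; rewrite -mulgA mulVg mulg1.
have hb2 : gamma a^-1 a (act h x)^-1 =
    gamma (h^-1 * a^-1) a (act h x^-1) * gamma h^-1 a^-1 (act (a * h) x^-1).
  rewrite actM -actV; have := gam_b h^-1 a^-1 a (act h x^-1).
  by rewrite mulVg gam1m mulr1.
exact: (alg_w (mu_nz _ _ _) (mu_nz _ _ _) (mu_nz _ _ _) hd hb1 hb2).
Qed.

Lemma wS_gw h q : gw h (tau q) * wS (tau q) =
  wS (rgt h (tau q)) * wS (lft h (tau q)) * gw (h * q.2)%g q.
Proof.
case: q => y k; rewrite /gw /tau /rgt /lft /=.
have := wS_mul (act k y^-1) (k^-1 * h^-1) h.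
rewrite mulgVK invgM !invgK -actV invgK actK => E.
rewrite invgM mulKVg.
by apply: alg_div E; rewrite gam_nz.
Qed.

Lemma tau_lft h q : tau (lft (h * q.2)%g q) = rgt h (tau q).
Proof.
case: q => y k; rewrite /tau /lft /rgt /= invgM mulKVg invgK actM -actV actK.
by rewrite actV.
Qed.

Lemma tau_rgt h q : tau (rgt (h * q.2)%g q) = lft h (tau q).
Proof. by case: q => y k; rewrite /tau /lft /rgt /= invgM actM. Qed.

Lemma SH_mul f g : SH Sm (mulH m f g) = mulH m (SH Sm g) (SH Sm f).
Proof.
apply: functional_extensionality => q.
rewrite SHE mulHE mulr_suml [RHS]mulHE [RHS](sum_reindexM q.2); apply: eq_bigr => h _.
rewrite !SHE tau_lft tau_rgt.
have E := wS_gw h q.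
transitivity (f (lft h (tau q)) * g (rgt h (tau q)) * (gw h (tau q) * wS (tau q))).
  by ring.
by rewrite E; ring.
Qed.

Lemma SH_one : SH Sm u = u.
Proof.
apply: functional_extensionality => q.
case: q => y k; rewrite SHE /Hu /tau /wS /= invg_eq1.
case: eqP => [->|]; last by rewrite mul0r.
by rewrite !invg1 gam1l mu1l divr1 mulr1.
Qed.


Local Notation dlt := (@dlt K (X * G)%type).

Lemma SH_dlt q p : SH Sm (dlt q) p = if tau p == q then wS (tau p) else 0.
Proof. by rewrite SHE /dlt; case: (tau p == q); rewrite ?mul1r ?mul0r. Qed.

Lemma mulH_dlt_r F q r : mulH m F (dlt q) r =
  if r.1 == q.1 then F (lft q.2 r) * gw q.2 r else 0.
Proof.
rewrite mulHE (sum_collapse q.2) => [|h hh].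
  case: q => y h; case: r => z k; rewrite /dlt /rgt /= xpair_eqE eqxx andbT.
  by case: (z == y); rewrite ?mulr1 ?mulr0 ?mul0r.
case: q hh => y g hh; rewrite /dlt /rgt /= xpair_eqE.
by rewrite (negbTE hh) andbF mulr0 mul0r.
Qed.

Lemma antipode_alpha f :
  (fun r => \sum_q1 \sum_q2 DeltaH dl f q1 q2 *
     mulH m (mulH m (SH Sm (dlt q1)) (@Halpha K G X)) (dlt q2) r)
  = (fun r => epsH e f * (@Halpha K G X) r).
Proof.
apply: functional_extensionality => r; rewrite /Halpha.
under eq_bigr => q1 _ do under eq_bigr => q2 _ do rewrite mulH1 mulH_dlt_r.
rewrite exchange_big /= sumB (sum_collapse r.1) => [|b hb]; last first.
  apply: big1 => g _; apply: big1 => q1 _.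
  by rewrite /= eq_sym (negbTE hb) mulr0.
transitivity (\sum_g DeltaH dl f (tau (lft g r)) (r.1, g) * (wS (tau (lft g r)) * gw g r)).
  apply: eq_bigr => g _; rewrite /= eqxx (sum_collapse (tau (lft g r))) => [|q1 hq].
    by rewrite SH_dlt eqxx.
  by rewrite SH_dlt eq_sym (negbTE hq) mul0r mulr0.
case: r => z k; rewrite /Hu /=.
have [->|nk] := eqVneq k 1%g.
  rewrite mulr1 epsE; apply: eq_bigr => g _.
  rewrite /tau /lft /gw /wS /= mul1g invgK -actV actK DeltaE /= eqxx mulVg invgK.
  by field; rewrite mu_nz gam_nz.
rewrite mulr0; apply: big1 => g _; rewrite DeltaE /tau /lft /=.
case: eqP; rewrite ?mul0r // invgM invgK => E.
have : (k^-1 = 1)%g by apply: (mulgI g); rewrite mulg1 -E.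
by move/eqP; rewrite invg_eq1 => /eqP hk; rewrite hk eqxx in nk.
Qed.


Local Notation beta := (Hbeta omega).

Lemma mulH_beta F p : mulH m F beta p = F p * omega p.1^-1 p.1 p.1^-1.
Proof.
rewrite mulHE (sum_collapse 1%g) => [|h hh].
  by rewrite lft1 gw1 /Hbeta /= eqxx mulr1.
by rewrite /Hbeta /= (negbTE hh) mulr0 mul0r.
Qed.

Lemma antipode_beta f :
  (fun r => \sum_q1 \sum_q2 DeltaH dl f q1 q2 *
     mulH m (mulH m (dlt q1) beta) (SH Sm (dlt q2)) r)
  = (fun r => epsH e f * beta r).
Proof.
apply: functional_extensionality => r.
under eq_bigr => q1 _ do under eq_bigr => q2 _ do rewrite mulHE mulr_sumr.
rewrite sum_pull2.
transitivity (\sum_h DeltaH dl f (lft h r) (tau (rgt h r)) *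
   (omega (lft h r).1^-1 (lft h r).1 (lft h r).1^-1 * wS (tau (rgt h r)) * gw h r)).
  apply: eq_bigr => h _; rewrite (sum_collapse (lft h r)) => [|q1 hq]; last first.
    apply: big1 => q2 _; rewrite mulH_beta /dlt.
    by rewrite eq_sym (negbTE hq) mul0r mul0r mul0r mulr0.
  rewrite (sum_collapse (tau (rgt h r))) => [|q2 hq]; last first.
    by rewrite SH_dlt eq_sym (negbTE hq) mulr0 mul0r mulr0.
  by rewrite mulH_beta SH_dlt /dlt !eqxx mul1r.
case: r => z k; rewrite /Hbeta /=.
have [->|nk] := eqVneq k 1%g.
  rewrite epsE mulr_suml (sum_reindexV (fun g => f (1%g, g) * _)).
  apply: eq_bigr => h _.
  rewrite /tau /lft /rgt /gw /wS /= DeltaE /= mul1g eqxx.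
  rewrite -actMx mulgV actx1 -!actV !invgK gam_inv.
  have := mu_c h^-1 (act h z^-1) (act h z) (act h z^-1).
  rewrite -!actMx mulVg mulgV !actx1 mu1r mu1m mulr1 mul1r !actK => E.
  by apply: alg_b E; rewrite ?mu_nz ?om_nz ?gam_nz.
rewrite mulr0; apply: big1 => h _; rewrite DeltaE /tau /lft /rgt /=.
case: eqP; rewrite ?mul0r // => E.
have : (k = 1)%g by apply: (mulIg (h^-1)%g); rewrite mul1g -E.
by move=> hk; rewrite hk eqxx in nk.
Qed.


Definition D3 (w : X -> X -> X -> K) (p q r : B) : K :=
  if [&& p.2 == 1%g, q.2 == 1%g & r.2 == 1%g] then w p.1 q.1 r.1 else 0.

Lemma sum_D3 w (T : B -> B -> B -> K) :
  \sum_p1 \sum_p2 \sum_p3 D3 w p1 p2 p3 * T p1 p2 p3 =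
  \sum_x1 \sum_x2 \sum_x3 w x1 x2 x3 * T (x1, 1%g) (x2, 1%g) (x3, 1%g).
Proof.
rewrite sumB; apply: eq_bigr => x1 _; rewrite (sum_collapse 1%g) => [|g1 hg]; last first.
  by apply: big1 => p2 _; apply: big1 => p3 _; rewrite /D3 /= (negbTE hg) mul0r.
rewrite sumB; apply: eq_bigr => x2 _; rewrite (sum_collapse 1%g) => [|g2 hg]; last first.
  by apply: big1 => p3 _; rewrite /D3 /= eqxx (negbTE hg) mul0r.
rewrite sumB; apply: eq_bigr => x3 _; rewrite (sum_collapse 1%g) => [|g3 hg]; last first.
  by rewrite /D3 /= !eqxx (negbTE hg) mul0r.
by rewrite /D3 /= !eqxx.
Qed.

Lemma sum_Phi (T : B -> B -> B -> K) :
  \sum_p1 \sum_p2 \sum_p3 Phi p1 p2 p3 * T p1 p2 p3 =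
  \sum_x1 \sum_x2 \sum_x3 omega x1 x2 x3 * T (x1, 1%g) (x2, 1%g) (x3, 1%g).
Proof. exact: sum_D3. Qed.

Lemma sum_Phii (T : B -> B -> B -> K) :
  \sum_p1 \sum_p2 \sum_p3 Phii p1 p2 p3 * T p1 p2 p3 =
  \sum_x1 \sum_x2 \sum_x3 (omega x1 x2 x3)^-1 * T (x1, 1%g) (x2, 1%g) (x3, 1%g).
Proof. exact: (sum_D3 (fun x y z => (omega x y z)^-1)). Qed.

Lemma SH_dlt1 x : SH Sm (dlt (x, 1%g)) = dlt (x^-1, 1)%g.
Proof.
apply: functional_extensionality => p; rewrite SH_dlt.
case: (tau p =P (x, 1%g)) => [E|ne].
  have hp : p = (x^-1, 1)%g by rewrite -(tauK p) E /tau /= act1 invg1.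
  by rewrite E /wS /dlt /= invg1 gam1l mu1l divr1 hp eqxx.
rewrite /dlt; case: eqP => // hp; case: ne.
by rewrite hp /tau /= act1 invg1 invgK.
Qed.

Lemma mulH_dlt1_r F x r : mulH m F (dlt (x, 1%g)) r = if r.1 == x then F r else 0.
Proof. by rewrite mulH_dlt_r /= lft1 gw1 mulr1. Qed.

Lemma om_inv z : omega z z^-1 z * omega z^-1 z z^-1 = 1.
Proof.
have := om_a z z^-1 z z^-1.
by rewrite mulVg mulgV om1m om1r om1l mulr1 mul1r mulrC.
Qed.

Lemma antipode_Phi :
  (fun r => \sum_p1 \sum_p2 \sum_p3 Phi p1 p2 p3 *
     mulH m (mulH m (mulH m (mulH m (dlt p1) beta) (SH Sm (dlt p2)))
        (@Halpha K G X)) (dlt p3) r) = u.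
Proof.
apply: functional_extensionality => r; rewrite sum_Phi /Halpha.
under eq_bigr => x1 _ do under eq_bigr => x2 _ do under eq_bigr => x3 _ do
  rewrite SH_dlt1 mulH1 !mulH_dlt1_r mulH_beta.
case: r => z k /=.
rewrite (sum_collapse z) => [|x1 hx]; last first.
  apply: big1 => x2 _; apply: big1 => x3 _.
  rewrite /dlt xpair_eqE [z == x1]eq_sym (negbTE hx) /=.
  by case: ifP; rewrite ?mulr0 //; case: ifP; rewrite ?mul0r ?mulr0.
rewrite (sum_collapse (z^-1)%g) => [|x2 hx]; last first.
  apply: big1 => x3 _; rewrite [z == _^-1%g]eq_sym eqg_invLR (negbTE hx).
  by case: ifP => /=; rewrite ?mulr0.
rewrite (sum_collapse z) => [|x3 hx]; last first.
  by rewrite eq_sym (negbTE hx) mulr0.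
rewrite !eqxx invgK eqxx /dlt xpair_eqE eqxx /= /Hu /=.
case: (k == 1%g); rewrite ?mul1r ?mul0r ?mulr0 //.
exact: om_inv.
Qed.

Lemma antipode_Phii :
  (fun r => \sum_p1 \sum_p2 \sum_p3 Phii p1 p2 p3 *
     mulH m (mulH m (mulH m (mulH m (SH Sm (dlt p1)) (@Halpha K G X)) (dlt p2))
        beta) (SH Sm (dlt p3)) r) = u.
Proof.
apply: functional_extensionality => r; rewrite sum_Phii /Halpha.
under eq_bigr => x1 _ do under eq_bigr => x2 _ do under eq_bigr => x3 _ do
  rewrite !SH_dlt1 mulH1 mulH_dlt1_r mulH_beta mulH_dlt1_r.
case: r => z k /=.
rewrite (sum_collapse (z^-1)%g) => [|x1 hx]; last first.
  apply: big1 => x2 _; apply: big1 => x3 _.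
  rewrite /Defs.dlt xpair_eqE [z == x1^-1%g]eq_sym eqg_invLR (negbTE hx) /=.
  by case: ifP; rewrite ?mulr0 //; case: ifP; rewrite ?mul0r ?mulr0.
rewrite (sum_collapse z) => [|x2 hx]; last first.
  apply: big1 => x3 _; rewrite [z == x2]eq_sym (negbTE hx).
  by case: ifP => /=; rewrite ?mul0r ?mulr0.
rewrite (sum_collapse (z^-1)%g) => [|x3 hx]; last first.
  by rewrite [z == x3^-1%g]eq_sym eqg_invLR (negbTE hx) mulr0.
rewrite !eqxx !invgK eqxx /dlt xpair_eqE eqxx /= /Hu /=.
case: (k == 1%g); rewrite ?mul1r ?mul0r ?mulr0 //.
by rewrite mulVf ?om_nz.
Qed.


Local Notation Rm := (HR d c).
Definition Ri (p q : B) : K :=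
  if (p.2 == 1%g) && (q.2 == (d p.1)^-1)%g
  then gamma (d p.1) (d p.1)^-1%g q.1 / c p.1 (act (d p.1)^-1%g q.1) else 0.

Lemma R_Ri : mul2 m Rm Ri = one2 u.
Proof.
apply: functional_extensionality => r1; apply: functional_extensionality => r2.
rewrite mul2E (sum_collapse 1%g) => [|h1 hh]; last first.
  by apply: big1 => h2 _; rewrite /Ri /= (negbTE hh) mulr0 !mul0r.
rewrite (sum_collapse (d r1.1)^-1%g) => [|h2 hh]; last first.
  by rewrite /Ri /= eqxx (negbTE hh) mulr0 !mul0r.
rewrite lft1 gw1 mulr1 /Ri /HR /one2 /Hu /= !eqxx /=.
case: r1 r2 => [x g1] [y g2] /=.
gcase g1; rewrite ?mul0r //= invgK.
rewrite -{2}[d x]mul1g (inj_eq (mulIg _)).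
gcase g2; rewrite ?mul0r ?mulr0 //= /gw /= mul1g invgK.
by field; rewrite c_nz gam_nz.
Qed.

Lemma Ri_R : mul2 m Ri Rm = one2 u.
Proof.
apply: functional_extensionality => r1; apply: functional_extensionality => r2.
rewrite mul2E (sum_collapse 1%g) => [|h1 hh]; last first.
  by apply: big1 => h2 _; rewrite /HR /= (negbTE hh) mulr0 !mul0r.
rewrite (sum_collapse (d r1.1)) => [|h2 hh]; last first.
  by rewrite /HR /= eqxx (negbTE hh) mulr0 !mul0r.
rewrite lft1 gw1 mulr1 /Ri /HR /one2 /Hu /= !eqxx /=.
case: r1 r2 => [x g1] [y g2] /=.
gcase g1; rewrite ?mul0r //=.
rewrite -{2}[(d x)^-1%g]mul1g (inj_eq (mulIg _)).
gcase g2; rewrite ?mul0r ?mulr0 //= /gw /= mul1g actK gam_inv.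
by field; rewrite c_nz gam_nz.
Qed.


Lemma actdV a b : act (d a)^-1 b = (a^-1 * b * a)%g.
Proof. by rewrite -dV act_d invgK. Qed.

Lemma R_Delta f : flip (DeltaH dl f) = mul2 m (mul2 m Rm (DeltaH dl f)) Ri.
Proof.
apply: functional_extensionality => q; apply: functional_extensionality => r.
rewrite [RHS]mul2E (sum_collapse 1%g) => [|h1 hh]; last first.
  by apply: big1 => h2 _; rewrite /Ri /= (negbTE hh) mulr0 !mul0r.
rewrite (sum_collapse (d q.1)^-1%g) => [|h2 hh]; last first.
  by rewrite /Ri /= eqxx (negbTE hh) mulr0 !mul0r.
rewrite lft1 gw1 mulr1 mul2E.
rewrite (sum_collapse q.2) => [|k1 hk]; last first.
  apply: big1 => k2 _.
  by rewrite /HR /= divg_eq1 eq_sym (negbTE hk) !mul0r.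
rewrite (sum_collapse q.2) => [|k2 hk]; last first.
  by rewrite DeltaE /= (negbTE hk) mulr0 !mul0r.
rewrite rgtK lftK gwK mulr1 /flip !DeltaE.
case: q r => [a g1] [b g2]; rewrite /HR /Ri /lft /rgt /gw /= !eqxx /= !invgK d_act.
rewrite (inj_eq (mulIg _)) (inj_eq (mulIg _)).
have [->|ne] := eqVneq g2 g1; last first.
  by rewrite /= ?mul0r ?mulr0.
rewrite ?eqxx /=.
have -> : (a * act (d a)^-1 b = b * a)%g by rewrite actdV !mulgA mulgV mul1g.
have hv : (a * act (d a)^-1 b * a^-1 = b)%g by rewrite actdV !mulgA mulgV mul1g mulgK.
have E1 := c_e g1 a (act (d a)^-1 b); rewrite hv in E1.
have E2 := gam_b g1 (d a) (d a)^-1 b; rewrite mulgV gam1m mulr1 in E2.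
by apply: (alg_R _ _ _ _ _ E1 E2); rewrite ?c_nz ?mu_nz ?gam_nz.
Qed.


Lemma esupp_leg312 : esupp3 (leg312 Phi).
Proof. by move=> p q r /esupp_Phi /and3P [h1 h2 h3]; rewrite h1 h2 h3. Qed.
Lemma esupp_leg132 : esupp3 (leg132 Phii).
Proof. by move=> p q r /esupp_Phii /and3P [h1 h2 h3]; rewrite h1 h2 h3. Qed.
Lemma esupp_leg231 : esupp3 (leg231 Phii).
Proof. by move=> p q r /esupp_Phii /and3P [h1 h2 h3]; rewrite h1 h2 h3. Qed.
Lemma esupp_leg213 : esupp3 (leg213 Phi).
Proof. by move=> p q r /esupp_Phi /and3P [h1 h2 h3]; rewrite h1 h2 h3. Qed.

Lemma hexagon1 : D_id dl Rm = mul3 m (mul3 m (mul3 m (mul3 m (leg312 Phi)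
  (leg13 u Rm)) (leg132 Phii)) (leg23 u Rm)) Phi.
Proof.
apply: functional_extensionality => s1; apply: functional_extensionality => s2.
apply: functional_extensionality => s3.
rewrite mul3_re; last exact: esupp_Phi.
rewrite mul3E.
rewrite (sum_collapse 1%g) => [|h1 hh]; last first.
  apply: big1 => h2 _; apply: big1 => h3 _.
  by rewrite /leg23 /Hu /= (negbTE hh) !(mul0r, mulr0).
rewrite (sum_collapse 1%g) => [|h2 hh]; last first.
  apply: big1 => h3 _.
  by rewrite /leg23 /HR /= (negbTE hh) !(mul0r, mulr0).
rewrite (sum_collapse (d s2.1)) => [|h3 hh]; last first.
  by rewrite /leg23 /HR /= eqxx (negbTE hh) !(mul0r, mulr0).
rewrite !lft1 !gw1 !mulr1.
rewrite mul3_re; last exact: esupp_leg132.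
rewrite mul3_le; last exact: esupp_leg312.
rewrite D_idE /leg23 /leg13 /leg312 /leg132 /HR /HPhi /Phii /Hu /lft /rgt /gw.
case: s1 s2 s3 => [x1 g1] [x2 g2] [x3 g3] /=.
gcase g1; gcase g2; rewrite /= ?eqxx /= ?(mulr0, mul0r) ?mulr1 ?mul1r ?if_same //= ?(mulr0, mul0r) //.
rewrite dM divg_eq; have [->|ne] := eqVneq g3 (d x1 * d x2)%g; last first.
  by rewrite ?(mul0r, mulr0).
rewrite mulgK mu1l !act1 -actM -dM !act_d c_f.
by field; rewrite !om_nz gam_nz.
Qed.


Lemma hexagon2 : id_D dl Rm = mul3 m (mul3 m (mul3 m (mul3 m (leg231 Phii)
  (leg13 u Rm)) (leg213 Phi)) (leg12 u Rm)) Phii.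
Proof.
apply: functional_extensionality => s1; apply: functional_extensionality => s2.
apply: functional_extensionality => s3.
rewrite mul3_re; last exact: esupp_Phii.
rewrite mul3E.
rewrite (sum_collapse 1%g) => [|h1 hh]; last first.
  apply: big1 => h2 _; apply: big1 => h3 _.
  by rewrite /leg12 /HR /= (negbTE hh) !(mul0r, mulr0).
rewrite (sum_collapse (d s1.1)) => [|h2 hh]; last first.
  apply: big1 => h3 _.
  by rewrite /leg12 /HR /= eqxx (negbTE hh) !(mul0r, mulr0).
rewrite (sum_collapse 1%g) => [|h3 hh]; last first.
  by rewrite /leg12 /Hu /= (negbTE hh) !(mul0r, mulr0).
rewrite !lft1 !gw1 !mulr1.
rewrite mul3_re; last exact: esupp_leg213.
rewrite mul3_le; last exact: esupp_leg231.
rewrite id_DE /leg12 /leg13 /leg231 /leg213 /HR /HPhi /Phii /Hu /lft /rgt /gw.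
case: s1 s2 s3 => [x1 g1] [x2 g2] [x3 g3] /=.
gcase g1; rewrite /= ?eqxx /= ?(mulr0, mul0r) ?mulr1 ?mul1r ?if_same //= ?(mulr0, mul0r) //.
rewrite divg_eq1.
have [->|n2] := eqVneq g2 (d x1); last first.
  kill g2 n2; rewrite ?if_same /= ?(mulr0, mul0r) //.
  by case: ifP; rewrite ?(mulr0, mul0r).
have [->|n3] := eqVneq g3 (d x1); last first.
  kill g3 n3; by rewrite /= ?(mulr0, mul0r).
rewrite ?eqxx mulgV gam1l invr1 mulr1 !act1 !act_d c_g.
by field; rewrite !om_nz mu_nz.
Qed.


Theorem main_thm : quasitriangular_quasiHopf (Hm act gamma) (@Hu K G X) (Hdl mu)
  (@He K G X) (HPhi omega) (@Halpha K G X) (Hbeta omega) (HS act gamma mu) (HR d c).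
Proof.
split.
  split; first exact: mulH_assoc.
  by split; [exact: mul1H | exact: mulH1].
exists Phii, Ri.
split.
  split; first exact: Delta_mul.
  split; first exact: Delta_one.
  split; first exact: eps_mul.
  split; first exact: eps_one.
  split; first exact: Phi_Phii.
  split; first exact: Phii_Phi.
  split; first exact: qcoassoc.
  split; first exact: pentagon.
  split; first exact: eps_Delta.
  split; first exact: Delta_eps.
  exact: Phi_eps.
split.
  split; first exact: SH_bij.
  split; first exact: SH_mul.
  split; first exact: SH_one.
  split; first exact: antipode_alpha.
  split; first exact: antipode_beta.
  split; first exact: antipode_Phi.
  exact: antipode_Phii.
split; first exact: R_Ri.
split; first exact: Ri_R.
split; first exact: R_Delta.
split; first exact: hexagon1.
exact: hexagon2.
Qed.

End Main.

Unset Implicit Arguments. Set Strict Implicit.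

Theorem proposition6p1 (K : closedFieldType) (G X : finGroupType)
  (act : G -> X -> X) (d : X -> G)
  (omega : X -> X -> X -> K) (gamma : G -> G -> X -> K)
  (mu : G -> X -> X -> K) (c : X -> X -> K) :
  [pchar K] =i pred0 ->
  crossed_module act d ->
  quasi_abelian_3cocycle act d omega gamma mu c ->
  normalized_cocycle omega gamma mu c ->
  quasitriangular_quasiHopf
    (Hm act gamma) (@Hu K G X) (Hdl mu) (@He K G X) (HPhi omega)
    (@Halpha K G X) (Hbeta omega) (HS act gamma mu) (HR d c).
Proof.
move=> _ HCM HQ HN.
exact: (main_thm HCM HQ HN).
Qed.
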